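(* Let $\mathcal{T}$ be a directed poset, $X:\mathcal{T}\to\mathbf{Set}_*$ a diagram of pointed sets and $A$ an abelian group. Then the natural map $\rho:(\lim_\mathcal{T}X)\wedge A\to\lim_\mathcal{T}(X\wedge A)$ is injective.
   Context: A directed poset $\mathcal{T}$ is regarded as a category with a single morphism $t\to s$ whenever $t\ge s$; for $t\geq s$ write $\phi_{t,s}:X(t)\to X(s)$ for the structure map. For a pointed set $Y$ (base point $*$), $Y\wedge A:=\bigoplus_{Y\setminus\{*\}}A$, whose elements are finitely supported pointed maps $Y\to A$; for $s\in Y$, $v\in A$, $sv$ is the element with value $v$ at $s$ and $0$ elsewhere ($*v=0$); a pointed map $f$ induces $f_*(sv)=f(s)v$. The natural map $\rho$ is defined by $\rho(xv)(t)=x(t)v$ for $x\in\lim_\mathcal{T}X$, $v\in A$, $t\in\mathcal{T}$. *)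

(* Defs.v *)
From HB Require Import structures.
From mathcomp Require Import all_boot all_order all_algebra.
From Stdlib Require List.
From Stdlib Require Import ClassicalDescription ClassicalEpsilon.
Set Implicit Arguments. Unset Strict Implicit. Unset Printing Implicit Defensive.
Import GRing.Theory.
Local Open Scope ring_scope.

Definition directed_poset (T : Type) (le : T -> T -> Prop) : Prop :=
  [/\ (forall t, le t t),
      (forall a b c, le a b -> le b c -> le a c),
      (forall a b, le a b -> le b a -> a = b),
      (exists t : T, True) &
      (forall a b, exists c, le a c /\ le b c)].

Definition pointed_diagram (T : Type) (le : T -> T -> Prop) (X : T -> Type)
  (pt : forall t, X t) (phi : forall t s, le s t -> X t -> X s) : Prop :=
  [/\ (forall t s (H : le s t), phi t s H (pt t) = pt s),
      (forall t (H : le t t) (x : X t), phi t t H x = x) &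
      (forall t s r (Hts : le s t) (Hsr : le r s) (Htr : le r t) (x : X t),
          phi s r Hsr (phi t s Hts x) = phi t r Htr x)].

Definition plim (T : Type) (le : T -> T -> Prop) (X : T -> Type)
  (phi : forall t s, le s t -> X t -> X s) : Type :=
  {x : forall t, X t | forall t s (H : le s t), phi t s H (x t) = x s}.

Definition plim_base (T : Type) (le : T -> T -> Prop) (X : T -> Type)
  (pt : forall t, X t) (phi : forall t s, le s t -> X t -> X s)
  (x : plim phi) : Prop :=
  forall t, proj1_sig x t = pt t.
Arguments plim_base {T le X} pt phi x.

(* Y /\ A for a pointed set Y (base point described by the predicate isbase):
   finitely supported maps Y -> A vanishing at the base point. *)
Definition smash (Y : Type) (isbase : Y -> Prop) (A : zmodType) : Type :=
  {f : Y -> A | (forall y, isbase y -> f y = 0) /\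
                (exists s : seq Y, List.NoDup s /\ forall y, f y <> 0 -> List.In y s)}.

Definition smash_supp (Y : Type) (isbase : Y -> Prop) (A : zmodType)
  (f : smash isbase A) : seq Y :=
  proj1_sig (constructive_indefinite_description _ (proj2 (proj2_sig f))).

(* This is the additive extension of
   rho(x v)(t) = x(t) v. *)
Definition rho (T : Type) (le : T -> T -> Prop) (X : T -> Type)
  (pt : forall t, X t) (phi : forall t s, le s t -> X t -> X s) (A : zmodType)
  (f : smash (plim_base pt phi) A) (t : T) (y : X t) : A :=
  if excluded_middle_informative (y = pt t) then 0
  else \sum_(x <- smash_supp f)
         (if excluded_middle_informative (proj1_sig x t = y)
          then proj1_sig f x else 0).
Arguments rho {T le X pt phi A} f t y.

(* Main.v *)
Require Import Defs.
From mathcomp Require Import all_boot all_order all_algebra.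
From Stdlib Require Import Classical FunctionalExtensionality ProofIrrelevance ClassicalDescription ClassicalEpsilon.
Import GRing.Theory.
Local Open Scope ring_scope.

Lemma sum_single (A : zmodType) (Y : Type) (s : seq Y) (F : Y -> A)
  (P : Y -> Prop) (x0 : Y) :
  List.NoDup s -> P x0 -> (forall x, List.In x s -> x <> x0 -> ~ P x) ->
  \sum_(x <- s) (if excluded_middle_informative (P x) then F x else 0)
  = if excluded_middle_informative (List.In x0 s) then F x0 else 0.
Proof.
elim: s => [|a s IH] Hnd HP Hs.
  by rewrite big_nil; case: excluded_middle_informative.
inversion Hnd as [|a' s' Hna Hnd' E]; subst.
rewrite big_cons IH //; last by move=> x Hx; apply: Hs; right.
clear IH.
case: (classic (a = x0)) => [Ea|ne]; first subst a.
  destruct (excluded_middle_informative (P x0)) as [h1|]; last by [].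
  destruct (excluded_middle_informative (List.In x0 s)) as [|h2]; first by [].
  destruct (excluded_middle_informative (List.In x0 (x0 :: s))) as [h3|n];
    last by exfalso; apply: n; left.
  by rewrite addr0.
case: excluded_middle_informative => Pa.
  by exfalso; apply: (Hs a) => //; left.
rewrite add0r.
case: excluded_middle_informative => H1; case: excluded_middle_informative => H2 //.
- by exfalso; apply: H2; right.
- by exfalso; case: H2 => // H; apply: ne.
Qed.

Lemma upper (T : Type) (le : T -> T -> Prop) (Y : Type) (Q : Y -> T -> Prop) :
  directed_poset le ->
  (forall y t t', Q y t -> le t t' -> Q y t') ->
  forall (L : seq Y) t0, (forall y, List.In y L -> exists t, Q y t) ->
  exists t, le t0 t /\ forall y, List.In y L -> Q y t.
Proof.
case=> refl trans _ _ dir Qm; elim=> [|a L IH] t0 H.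
  by exists t0; split.
have [t1 [H1 H2]] := IH t0 (fun y Hy => H y (or_intror Hy)).
have [ta Ha] := H a (or_introl erefl).
have [c [Hc1 Hc2]] := dir t1 ta.
exists c; split; first exact: trans H1 Hc1.
move=> y [<-|Hy]; first exact: Qm Ha Hc2.
exact: Qm (H2 y Hy) Hc1.
Qed.

Theorem mainTheorem7 (T : Type) (le : T -> T -> Prop) (X : T -> Type)
  (pt : forall t, X t) (phi : forall t s, le s t -> X t -> X s)
  (A : zmodType) :
  directed_poset le -> pointed_diagram pt phi ->
  forall f g : smash (plim_base pt phi) A,
    (forall t (y : X t), rho f t y = rho g t y) -> f = g.
Proof.
move=> Hd Hp f g Hfg.
have Hd' := Hd; case: Hd' => refl trans _ [t00 _] dir.
case: Hp => Hpt _ _.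
suff E : proj1_sig f = proj1_sig g.
  case: f g Hfg E => [f pf] [g pg] /= _ E; subst g.
  by rewrite (proof_irrelevance _ pf pg).
apply: functional_extensionality => x0.
case: (classic (plim_base pt phi x0)) => Hb.
  by rewrite (proj1 (proj2_sig f) x0 Hb) (proj1 (proj2_sig g) x0 Hb).
have [t0 Ht0] : exists t, proj1_sig x0 t <> pt t.
  by apply: not_all_ex_not.
have plim_eq : forall y z : plim phi,
    (forall t, proj1_sig y t = proj1_sig z t) -> y = z.
  move=> [y py] [z pz] /= E; have E' := functional_extensionality_dep _ _ E.
  by subst z; rewrite (proof_irrelevance _ py pz).
set L := smash_supp f ++ smash_supp g.
pose Q (y : plim phi) (t : T) := y <> x0 -> proj1_sig y t <> proj1_sig x0 t.
have Qm : forall y t t', Q y t -> le t t' -> Q y t'.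
  move=> y t t' Hq Hle ne E; apply: (Hq ne).
  by rewrite -(proj2_sig y t' t Hle) -(proj2_sig x0 t' t Hle) E.
have [ts [Hle HQ]] : exists t, le t0 t /\ forall y, List.In y L -> Q y t.
  apply: (@upper T le _ Q Hd Qm L t0) => y _.
  case: (classic (y = x0)) => [->|ne]; first by exists t0.
  apply: NNPP => Hn; apply: ne; apply: plim_eq.
  move=> t; apply: NNPP => Hne; apply: Hn; exists t => _; exact: Hne.
have Hts : proj1_sig x0 ts <> pt ts.
  move=> E; apply: Ht0; by rewrite -(proj2_sig x0 ts t0 Hle) E Hpt.
have key : forall h : smash (plim_base pt phi) A,
    (forall y, List.In y (smash_supp h) -> List.In y L) ->
    rho h ts (proj1_sig x0 ts) = proj1_sig h x0.
  move=> h Hsub; rewrite /rho.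
  destruct (excluded_middle_informative (proj1_sig x0 ts = pt ts)) as [e|ne]; [by exfalso; apply: Hts |]; simpl.
  have [Hnd Hcov] := proj2_sig (constructive_indefinite_description _
                                  (proj2 (proj2_sig h))).
  rewrite (@sum_single A _ _ _ (fun x => proj1_sig x ts = proj1_sig x0 ts) x0) //.
  - match goal with |- context [excluded_middle_informative ?P] =>
      destruct (excluded_middle_informative P) as [i|Hn] end; [by [] |]; simpl.
    apply: NNPP => H; apply: Hn; apply: Hcov => E; apply: H; by rewrite E.
  - by move=> x Hx ne2; apply: (HQ x (Hsub x Hx)).
rewrite -(key f) ?Hfg ?key // => y Hy; rewrite /L List.in_app_iff; tauto.
Qed.
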